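(* The configuration space $\Xi(\ell)\subset(\mathbb{RP}^1)^n$ is the algebraic variety given by the $\binom n2$ equations $$A_{pq}t_p^2t_q^2+B_{pq}t_p^2-2t_pt_q+B_{qp}t_q^2+E_{pq}=0,\qquad 1\le p<q\le n,$$ where $A_{pq}=h_{qp}+h_{pq}-2g_{pq}+E_{pq}$ and $B_{pq}=h_{qp}+E_{pq}$ (so $B_{qp}=h_{pq}+E_{pq}$).
   Context: $\mathbb{X}^n$ is one of $\mathbb{E}^n$; $\mathbb{S}^n$ (unit sphere in $\mathbb{E}^{n+1}$); $\Lambda^n$ (a sheet of the hyperboloid $(\mathbf{x},\mathbf{x})=-1$ in $\mathbb{E}^{n,1}$); tangent vectors are regarded as vectors of the ambient space $\mathbb{V}=\mathbb{E}^n,\mathbb{E}^{n+1},\mathbb{E}^{n,1}$. A cross-polytope has vertices $\mathbf{a}_1,\dots,\mathbf{a}_n,\mathbf{b}_1,\dots,\mathbf{b}_n$ and facets spanned by $n$-tuples containing exactly one of $\mathbf{a}_p,\mathbf{b}_p$ for each $p$ (all assumed non-degenerate). Fix a set $\ell$ of edge lengths. Its butterfly: the facet $\Delta=[\mathbf{a}_1\dots\mathbf{a}_n]$ (fixed) and the facets $\Delta_p$ spanned by $\mathbf{b}_p$ and $\mathbf{a}_q$ ($q\ne p$), hinged along the face $F_p$ of $\Delta$ opposite $\mathbf{a}_p$; it is determined (up to isometry) by all edge lengths in $\ell$ except those of the edges $[\mathbf{b}_p\mathbf{b}_q]$. Let $\mathbf{m}$ be a unit normal vector to $\Delta$ (orthogonal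 to the tangent space of $\Delta$), $\mathbf{n}_p$ the unit vector tangent to $\Delta$, orthogonal to $F_p$ and pointing into $\Delta$. Let $\beta_p$ be the length (for $\mathbb{E}^n$), the sine of the length (for $\mathbb{S}^n$), or the hyperbolic sine of the length (for $\Lambda^n$) of the altitude of $\Delta_p$ from $\mathbf{b}_p$. Let $\varphi_p$ be the oriented dihedral angle between $\Delta$ and $\Delta_p$, with $\sin\varphi_p>0$ iff $\Delta_p$ lies on the side of the hyperplane of $\Delta$ into which $\mathbf{m}$ points, $t_p=\tan(\varphi_p/2)\in\mathbb{RP}^1$, and $\mathbf{b}_p^0$ the position of $\mathbf{b}_p$ when $\varphi_p=0$. $G=(g_{pq})$ is the Gram matrix of $\mathbf{n}_1,\dots,\mathbf{n}_n$; $H=(h_{pq})$ with $h_{pq}=\beta_p^{-1}(\mathbf{b}_p^0-\mathbf{a}_r,\mathbf{n}_q)$ for any $r\ne q$ if $\mathbb{X}^n=\mathbb{E}^n$, and $h_{pq}=\beta_p^{-1}(\mathbf{b}_p^0,\mathbf{n}_q)$ otherwise. For $p\ne q$, with $\ell_{\mathbf{b}_p\mathbf{b}_q}$ the prescribed length and $\mathrm{dist}$ the distance in $\mathbb{X}^n$, $E_{pq}=\frac{1}{2\beta_p\beta_q}\bigl(-\tfrac12\ell^2_{\mathbf{b}_p\mathbf{b}_q}+\tfrac12\mathrm{dist}^2(\mathbf{b}_p^0,\mathbf{b}_q^0)\bigr)$ for $\mathbb{E}^n$, $E_{pq}=\frac{1}{2\beta_p\beta_q}\bigl(\cos\ell_{\mathbf{b}_p\mathbf{b}_q}-\cos\mathrm{dist}(\mathbf{b}_p^0,\mathbf{b}_q^0)\bigr)$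 for $\mathbb{S}^n$, $E_{pq}=\frac{1}{2\beta_p\beta_q}\bigl(-\cosh\ell_{\mathbf{b}_p\mathbf{b}_q}+\cosh\mathrm{dist}(\mathbf{b}_p^0,\mathbf{b}_q^0)\bigr)$ for $\Lambda^n$. The configuration space $\Xi(\ell)$ is the set of $(t_1,\dots,t_n)\in(\mathbb{RP}^1)^n$ such that the position of the butterfly with parameters $t_1,\dots,t_n$ gives all edges $[\mathbf{b}_p\mathbf{b}_q]$ their prescribed lengths $\ell_{\mathbf{b}_p\mathbf{b}_q}$. *)

(* Defs.v *)
From HB Require Import structures.
From mathcomp Require Import all_boot all_order all_algebra.
From mathcomp Require Import all_classical all_reals all_analysis.
Set Implicit Arguments. Unset Strict Implicit. Unset Printing Implicit Defensive.
Import Order.TTheory GRing.Theory Num.Theory.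
Local Open Scope ring_scope.

Inductive geom := Euc | Sph | Hyp.

Definition isEuc (k : geom) : bool := if k is Euc then true else false.
Definition isHyp (k : geom) : bool := if k is Hyp then true else false.

Definition amb (k : geom) (n : nat) : nat :=
  match k with Euc => n | _ => n.+1 end.

Section Geo.
Context {R : realType} {k : geom} {n : nat}.

Notation V := 'rV[R]_(amb k n).

Definition formSign (i : 'I_(amb k n)) : R :=
  if isHyp k && (nat_of_ord i == n) then -1 else 1.

Definition geomForm (u v : V) : R := \sum_(i < amb k n) formSign i * u 0 i * v 0 i.

(** points of X^n inside V (Lambda^n: the upper sheet of (x,x) = -1) *)
Definition inXn (x : V) : Prop :=
  match k with
  | Euc => True
  | Sph => geomForm x x = 1
  | Hyp => geomForm x x = -1 /\ (forall i : 'I_(amb k n), nat_of_ord i == n -> 0 < x 0 i)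
  end.

Definition coshR (x : R) : R := (expR x + expR (- x)) / 2.
Definition acoshR (x : R) : R := ln (x + Num.sqrt (x ^+ 2 - 1)).

Definition geomDist (x y : V) : R :=
  match k with
  | Euc => Num.sqrt (geomForm (x - y) (x - y))
  | Sph => acos (geomForm x y)
  | Hyp => acoshR (- geomForm x y)
  end.

(** non-degeneracy of the simplex with vertices v_1..v_n :
    affine independence (E^n), linear independence in V (S^n, Lambda^n) *)
Definition nondegSimplex (v : 'I_n -> V) : Prop :=
  forall lam : 'I_n -> R,
    (isEuc k -> \sum_(i < n) lam i = 0) ->
    \sum_(i < n) lam i *: v i = 0 -> forall i, lam i = 0.

Definition relv (x r : V) : V := if isEuc k then x - r else x.

Definition unitNormal (a : 'I_n -> V) (m : V) : Prop :=
  geomForm m m = 1 /\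
  (forall i j, geomForm m (relv (a i) (a j)) = 0).

Definition inDeltaDir (a : 'I_n -> V) (v : V) : Prop :=
  exists lam : 'I_n -> R, (isEuc k -> \sum_(i < n) lam i = 0) /\
    v = \sum_(i < n) lam i *: a i.

(** nv is the unit vector tangent to Delta, orthogonal to the face F_p of Delta
    opposite a_p, pointing into Delta *)
Definition innerFacetNormal (a : 'I_n -> V) (p : 'I_n) (nv : V) : Prop :=
  inDeltaDir a nv /\ geomForm nv nv = 1 /\
  (forall q r, q != p -> r != p -> geomForm nv (relv (a q) (a r)) = 0) /\
  (forall r, r != p -> 0 < geomForm nv (relv (a p) (a r))).

Definition replaceVertex (a : 'I_n -> V) (p : 'I_n) (b : V) : 'I_n -> V :=
  fun i => if i == p then b else a i.

(** some index different from p (used as the base point a_r, r <> p, in E^n;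
    the value of the inner products does not depend on the choice) *)
Definition otherIdx (p : 'I_n) : nat := if nat_of_ord p == 0%N then 1%N else 0%N.

Section Butterfly.
Variables (a : 'I_n -> V) (m : V) (nv : 'I_n -> V) (b0 : 'I_n -> V).

Definition baseVertex (p : 'I_n) : V :=
  match insub (otherIdx p) with Some r => a r | None => 0 end.

(** beta_p : (the length / sine / sinh of) the altitude of Delta_p from b_p,
    computed as the n_p-component of b_p^0 *)
Definition betaAlt (p : 'I_n) : R := geomForm (relv (b0 p) (baseVertex p)) (nv p).

Definition gramG (p q : 'I_n) : R := geomForm (nv p) (nv q).

Definition baseVertexq (q : 'I_n) : V := baseVertex q.
Definition matH (p q : 'I_n) : R := (betaAlt p)^-1 * geomForm (relv (b0 p) (baseVertexq q)) (nv q).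

Definition matE (ell : 'I_n -> 'I_n -> R) (p q : 'I_n) : R :=
  (2 * betaAlt p * betaAlt q)^-1 *
  match k with
  | Euc => - (ell p q) ^+ 2 / 2 + (geomDist (b0 p) (b0 q)) ^+ 2 / 2
  | Sph => cos (ell p q) - cos (geomDist (b0 p) (b0 q))
  | Hyp => - coshR (ell p q) + coshR (geomDist (b0 p) (b0 q))
  end.

Definition coefA ell (p q : 'I_n) : R := matH q p + matH p q - 2 * gramG p q + matE ell p q.
Definition coefB ell (p q : 'I_n) : R := matH q p + matE ell p q.

(** position of b_p when Delta_p is rotated about F_p to oriented dihedral
    angle phi with Delta (phi = 0 : b_p = b_p^0 ; sin phi > 0 : on the side of m):
    b_p(phi) = b_p^0 + beta_p ((cos phi - 1) n_p + sin phi m) *)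
Definition bPos (p : 'I_n) (phi : R) : V :=
  b0 p + betaAlt p *: ((cos phi - 1) *: nv p + sin phi *: m).

(** RP^1 = R u {oo} as option R (None = oo), and t = tan(phi/2) *)
Definition halfTan (phi : R) : option R :=
  if cos (phi / 2) == 0 then None else Some (sin (phi / 2) / cos (phi / 2)).

Definition homCoords (t : option R) : R * R :=
  match t with Some s => (s, 1) | None => (1, 0) end.

Definition configSpace (ell : 'I_n -> 'I_n -> R) : set ('I_n -> option R) :=
  [set t | exists phi : 'I_n -> R,
     (forall p, t p = halfTan (phi p)) /\
     (forall p q, p != q -> geomDist (bPos p (phi p)) (bPos q (phi q)) = ell p q)].

Definition eqVariety (ell : 'I_n -> 'I_n -> R) : set ('I_n -> option R) :=
  [set t | forall p q : 'I_n, (p < q)%N ->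
     let (xp, yp) := homCoords (t p) in let (xq, yq) := homCoords (t q) in
     coefA ell p q * xp ^+ 2 * xq ^+ 2 + coefB ell p q * xp ^+ 2 * yq ^+ 2
     - 2 * xp * yp * xq * yq + coefB ell q p * yp ^+ 2 * xq ^+ 2
     + matE ell p q * yp ^+ 2 * yq ^+ 2 = 0].

End Butterfly.
End Geo.

(* Main.v *)
Require Import Defs.
From HB Require Import structures.
From mathcomp Require Import all_boot all_order all_algebra.
From mathcomp Require Import all_classical all_reals all_analysis.
From mathcomp Require Import ring lra.
Import Order.TTheory GRing.Theory Num.Theory.
Local Open Scope ring_scope.



Section Bil.
Context {R : realType} {k : geom} {n : nat}.
Notation V := 'rV[R]_(amb k n).
Implicit Types u v w : V.

Lemma gFC u v : geomForm u v = geomForm v u.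
Proof. by rewrite /geomForm; apply: eq_bigr => i _; rewrite mulrAC. Qed.

Lemma gFDl u v w : geomForm (u + v) w = geomForm u w + geomForm v w.
Proof. rewrite /geomForm -big_split; apply: eq_bigr => i _; by rewrite mxE mulrDr mulrDl. Qed.

Lemma gFZl (c : R) u w : geomForm (c *: u) w = c * geomForm u w.
Proof. rewrite /geomForm mulr_sumr; apply: eq_bigr => i _; rewrite mxE; rewrite !mulrA; congr (_ * _); ring. Qed.

Lemma gFNl u w : geomForm (- u) w = - geomForm u w.
Proof. by rewrite -scaleN1r gFZl mulN1r. Qed.

Lemma gFBl u v w : geomForm (u - v) w = geomForm u w - geomForm v w.
Proof. by rewrite gFDl gFNl. Qed.

Lemma gFDr u v w : geomForm w (u + v) = geomForm w u + geomForm w v.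
Proof. by rewrite gFC gFDl !(gFC w). Qed.
Lemma gFZr (c : R) u w : geomForm w (c *: u) = c * geomForm w u.
Proof. by rewrite gFC gFZl (gFC w). Qed.
Lemma gFNr u w : geomForm w (- u) = - geomForm w u.
Proof. by rewrite gFC gFNl (gFC w). Qed.
Lemma gFBr u v w : geomForm w (u - v) = geomForm w u - geomForm w v.
Proof. by rewrite gFDr gFNr. Qed.

Lemma expand_nonEuc (x y np nq m : V) (bp bq cp sp cq sq X1 X2 g : R) :
  geomForm x m = 0 -> geomForm y m = 0 -> geomForm np m = 0 -> geomForm nq m = 0 ->
  geomForm m m = 1 -> geomForm x nq = X1 -> geomForm np y = X2 -> geomForm np nq = g ->
  geomForm (x + bp *: ((cp - 1) *: np + sp *: m)) (y + bq *: ((cq - 1) *: nq + sq *: m))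
  = geomForm x y + bq * (cq - 1) * X1 + bp * (cp - 1) * X2
    + bp * bq * ((cp - 1) * (cq - 1) * g + sp * sq).
Proof.
move=> h1 h2 h3 h4 h5 h6 h7 h8.
rewrite !(gFDl, gFDr, gFZl, gFZr).
rewrite ?(gFC m y) ?(gFC m nq) h1 h2 h3 h4 h5 h6 h7 h8.
ring.
Qed.

Lemma expand_Euc (D np nq m : V) (bp bq cp sp cq sq X1 X2 g : R) :
  geomForm D m = 0 -> geomForm np m = 0 -> geomForm nq m = 0 ->
  geomForm m m = 1 -> geomForm np np = 1 -> geomForm nq nq = 1 ->
  geomForm D np = X1 -> geomForm D nq = X2 -> geomForm np nq = g ->
  geomForm (D + bp *: ((cp - 1) *: np + sp *: m) - bq *: ((cq - 1) *: nq + sq *: m))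
           (D + bp *: ((cp - 1) *: np + sp *: m) - bq *: ((cq - 1) *: nq + sq *: m))
  = geomForm D D + 2 * bp * (cp - 1) * X1 - 2 * bq * (cq - 1) * X2
    + bp ^+ 2 * ((cp - 1) ^+ 2 + sp ^+ 2) + bq ^+ 2 * ((cq - 1) ^+ 2 + sq ^+ 2)
    - 2 * bp * bq * ((cp - 1) * (cq - 1) * g + sp * sq).
Proof.
move=> h1 h2 h3 h4 h5 h6 h7 h8 h9.
rewrite !(gFBl, gFBr, gFDl, gFDr, gFZl, gFZr, gFNl, gFNr).
rewrite ?(gFC m D) ?(gFC m np) ?(gFC m nq) ?(gFC np D) ?(gFC nq D) ?(gFC nq np).
rewrite h1 h2 h3 h4 h5 h6 h7 h8 h9.
ring.
Qed.
End Bil.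



Section Scal.
Context {R : realType}.

Lemma expR_ge1' (x : R) : 0 <= x -> 1 <= expR x.
Proof.
rewrite le0r => /orP [/eqP -> | hx]; first by rewrite expR0.
by apply/ltW; rewrite expR_gt1.
Qed.

Lemma coshK (l : R) : 0 <= l -> acoshR (coshR l) = l.
Proof.
move=> hl; rewrite /acoshR /coshR expRN.
have he : 1 <= expR l by apply: expR_ge1'.
move eq: (expR l) he => e he.
have e0 : 0 < e by lra.
have -> : ((e + e^-1) / 2) ^+ 2 - 1 = ((e - e^-1) / 2) ^+ 2.
  by field; apply/eqP => h; rewrite h ltxx in e0.
rewrite sqrtr_sqr ger0_norm; last first.
  apply: divr_ge0 => //; rewrite subr_ge0.
  apply: (le_trans _ he); rewrite invf_le1 //.
have -> : (e + e^-1) / 2 + (e - e^-1) / 2 = e.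
  by field; apply/eqP => h; rewrite h ltxx in e0.
by rewrite -eq expRK.
Qed.

Lemma acoshK (X : R) : 1 <= X -> coshR (acoshR X) = X.
Proof.
move=> hX; rewrite /coshR /acoshR.
have hs2 : Num.sqrt (X ^+ 2 - 1) ^+ 2 = X ^+ 2 - 1 by rewrite sqr_sqrtr //; nra.
have hs0 : 0 <= Num.sqrt (X ^+ 2 - 1) by apply: sqrtr_ge0.
move: (Num.sqrt _) hs2 hs0 => s hs2 hs0.
have u0 : 0 < X + s by lra.
rewrite expRN lnK; last by rewrite posrE.
have -> : (X + s)^-1 = X - s.
  apply: (@mulfI _ (X + s)); first by apply/eqP => h; rewrite h ltxx in u0.
  rewrite mulfV; last by apply/eqP => h; rewrite h ltxx in u0.
  have -> : (X + s) * (X - s) = X ^+ 2 - s ^+ 2 by ring.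
  by rewrite hs2; ring.
by field.
Qed.

Lemma halfTan_hom (phi x y : R) : homCoords (halfTan phi) = (x, y) ->
  0 < x ^+ 2 + y ^+ 2 /\ cos phi * (x ^+ 2 + y ^+ 2) = y ^+ 2 - x ^+ 2 /\
  sin phi * (x ^+ 2 + y ^+ 2) = 2 * x * y.
Proof.
have ec : cos phi = cos (phi / 2) ^+ 2 - sin (phi / 2) ^+ 2.
  by rewrite {1}(splitr phi) cosD !expr2.
have es : sin phi = 2 * sin (phi / 2) * cos (phi / 2).
  rewrite {1}(splitr phi) sinD; ring.
have e1 := cos2Dsin2 (phi / 2).
rewrite /halfTan /homCoords ec es; move: (cos (phi / 2)) (sin (phi / 2)) e1 => C S e1.
case: eqP => [C0 [<- <-] | /eqP C0 [<- <-]].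
  subst C; split; first lra.
  split; last ring.
  have -> : S ^+ 2 = 1 by lra.
  ring.
have C2 : 0 < C ^+ 2.
  by rewrite lt0r sqrf_eq0 C0 /= sqr_ge0.
have -> : (S / C) ^+ 2 + 1 ^+ 2 = (C ^+ 2)^-1.
  have -> : (S / C) ^+ 2 + 1 ^+ 2 = (C ^+ 2 + S ^+ 2) / C ^+ 2 by field.
  by rewrite e1 mul1r.
split; first by rewrite invr_gt0.
split; field; by [].
Qed.

Definition phiOf (t : option R) : R :=
  match t with None => pi | Some s => 2 * atan s end.

Lemma halfTan_phiOf t : halfTan (phiOf t) = t.
Proof.
case: t => [s|] /=; rewrite /halfTan.
  have -> : 2 * atan s / 2 = atan s by field.
  have c0 : cos (atan s) != 0.
    rewrite cos_atan invr_eq0; apply/eqP => h.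
    have : 0 < Num.sqrt (1 + s ^+ 2) by rewrite sqrtr_gt0; nra.
    by rewrite h ltxx.
  by rewrite (negbTE c0) -/(tan (atan s)) atanK.
by rewrite cos_pihalf eqxx.
Qed.

Lemma alg_equiv (hpq hqp g E A Bpq Bqp xp yp xq yq cp sp cq sq : R) :
  A = hqp + hpq - 2 * g + E -> Bpq = hqp + E -> Bqp = hpq + E ->
  0 < xp ^+ 2 + yp ^+ 2 -> cp * (xp ^+ 2 + yp ^+ 2) = yp ^+ 2 - xp ^+ 2 ->
  sp * (xp ^+ 2 + yp ^+ 2) = 2 * xp * yp ->
  0 < xq ^+ 2 + yq ^+ 2 -> cq * (xq ^+ 2 + yq ^+ 2) = yq ^+ 2 - xq ^+ 2 ->
  sq * (xq ^+ 2 + yq ^+ 2) = 2 * xq * yq ->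
  ((cq - 1) * hpq + (cp - 1) * hqp + (cp - 1) * (cq - 1) * g + sp * sq = 2 * E) <->
  (A * xp ^+ 2 * xq ^+ 2 + Bpq * xp ^+ 2 * yq ^+ 2
     - 2 * xp * yp * xq * yq + Bqp * yp ^+ 2 * xq ^+ 2
     + E * yp ^+ 2 * yq ^+ 2 = 0).
Proof.
move=> -> -> -> Np ecp esp Nq ecq esq.
have N10 : xp ^+ 2 + yp ^+ 2 != 0 by apply/eqP => h; rewrite h ltxx in Np.
have N20 : xq ^+ 2 + yq ^+ 2 != 0 by apply/eqP => h; rewrite h ltxx in Nq.
have -> : cp = (yp ^+ 2 - xp ^+ 2) / (xp ^+ 2 + yp ^+ 2) by rewrite -ecp mulfK.
have -> : sp = (2 * xp * yp) / (xp ^+ 2 + yp ^+ 2) by rewrite -esp mulfK.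
have -> : cq = (yq ^+ 2 - xq ^+ 2) / (xq ^+ 2 + yq ^+ 2) by rewrite -ecq mulfK.
have -> : sq = (2 * xq * yq) / (xq ^+ 2 + yq ^+ 2) by rewrite -esq mulfK.
set P := (X in _ <-> X = 0).
set W := (X in X = 2 * E <-> _).
have key : W - 2 * E = - 2 * P / ((xp ^+ 2 + yp ^+ 2) * (xq ^+ 2 + yq ^+ 2)).
  rewrite /W /P; field; by rewrite N10 N20.
have key2 : P = - ((xp ^+ 2 + yp ^+ 2) * (xq ^+ 2 + yq ^+ 2)) / 2 * (W - 2 * E).
  rewrite key; field; by rewrite N10 N20.
split => h.
  by rewrite key2 h subrr mulr0.
apply/eqP; rewrite -subr_eq0 key h; by rewrite !mulr0 mul0r.
Qed.
End Scal.



Lemma gF_ge0 {R : realType} {k : geom} {n : nat} (u : 'rV[R]_(amb k n)) :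
  isHyp k = false -> 0 <= geomForm u u.
Proof.
move=> hk; rewrite /geomForm; apply: sumr_ge0 => i _.
by rewrite /formSign hk /= mul1r -expr2 sqr_ge0.
Qed.

Lemma sph_bound {R : realType} {n : nat} (x y : 'rV[R]_(amb Sph n)) :
  geomForm x x = 1 -> geomForm y y = 1 -> -1 <= geomForm x y <= 1.
Proof.
move=> hx hy.
have h1 := @gF_ge0 R Sph n (x - y) erefl.
have h2 := @gF_ge0 R Sph n (x + y) erefl.
rewrite !(gFBl, gFBr, gFDl, gFDr) hx hy (gFC y x) in h1 h2.
apply/andP; split; lra.
Qed.

Lemma hyp_ineq {R : realType} {n : nat} (x y : 'rV[R]_(amb Hyp n)) :
  geomForm x x = -1 -> geomForm y y = -1 ->
  2 * (x 0 ord_max * y 0 ord_max) * geomForm x y <=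
  - ((x 0 ord_max) ^+ 2 + (y 0 ord_max) ^+ 2).
Proof.
move=> hx hy.
set x0 := x 0 ord_max; set y0 := y 0 ord_max.
have hz : 0 <= geomForm (y0 *: x - x0 *: y) (y0 *: x - x0 *: y).
  rewrite /geomForm; apply: sumr_ge0 => i _.
  rewrite /formSign /=.
  case: eqP => hi /=.
    have -> : i = ord_max by apply: val_inj.
    by rewrite !mxE -/x0 -/y0 [y0 * x0]mulrC subrr !mulr0.
  by rewrite mul1r -expr2 sqr_ge0.
rewrite !(gFBl, gFBr, gFZl, gFZr) hx hy (gFC y x) in hz.
lra.
Qed.

Lemma hyp_sheet {R : realType} {n : nat} (x y : 'rV[R]_(amb Hyp n)) :
  geomForm x x = -1 -> geomForm y y = -1 -> geomForm x y < 0 ->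
  0 < y 0 ord_max -> 0 < x 0 ord_max.
Proof.
move=> hx hy hxy hy0.
have := hyp_ineq x y hx hy.
move: (x 0 ord_max) (y 0 ord_max) hy0 => x0 y0 hy0 h.
rewrite ltNge; apply/negP => hx0.
have p1 : x0 * y0 <= 0 by nra.
move: (x0 * y0) p1 h => z p1 h.
nra.
Qed.

Lemma hyp_ge1 {R : realType} {n : nat} (x y : 'rV[R]_(amb Hyp n)) :
  geomForm x x = -1 -> geomForm y y = -1 ->
  0 < x 0 ord_max -> 0 < y 0 ord_max -> 1 <= - geomForm x y.
Proof.
move=> hx hy.
have := hyp_ineq x y hx hy.
move: (x 0 ord_max) (y 0 ord_max) => x0 y0 h hx0 hy0.
have p : 0 < x0 * y0 by apply: mulr_gt0.
have : 2 * (x0 * y0) <= x0 ^+ 2 + y0 ^+ 2.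
  have := sqr_ge0 (x0 - y0); rewrite sqrrB; lra.
move: (x0 * y0) (x0 ^+ 2 + y0 ^+ 2) p h => z w p h h2.
nra.
Qed.



Lemma cos_le1' {R : realType} (x : R) : cos x <= 1.
Proof. have := cos2Dsin2 x; move: (cos x) (sin x) => c s h; nra. Qed.

Lemma trig_aux {R : realType} (x : R) : (cos x - 1) ^+ 2 + sin x ^+ 2 = 2 - 2 * cos x.
Proof.
have := cos2Dsin2 x; move: (cos x) (sin x) => c s h.
transitivity (c ^+ 2 + s ^+ 2 - 2 * c + 1); first ring.
rewrite h; ring.
Qed.

Lemma euc_scal {R : realType} (Q0 Q W l bp bq : R) : 0 < bp -> 0 < bq -> 0 <= Q -> 0 <= l ->
  Q = Q0 - 2 * bp * bq * W ->
  (Num.sqrt Q = l <-> W = 2 * ((2 * bp * bq)^-1 * (- l ^+ 2 / 2 + Q0 / 2))).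
Proof.
move=> hp hq hQ hl eQ.
have b0 : (bq != 0) && (bp != 0) by rewrite !gt_eqF.
split.
  move=> hs; have : Q = l ^+ 2 by rewrite -hs sqr_sqrtr.
  rewrite eQ => h.
  have -> : Q0 = l ^+ 2 + 2 * bp * bq * W by rewrite -h; ring.
  by field.
move=> hW.
have -> : Q = l ^+ 2.
  by rewrite eQ hW; field.
by rewrite sqrtr_sqr ger0_norm.
Qed.

Lemma Wself {R : realType} (f : R) :
  (cos f - 1) * 1 + (cos f - 1) * 1 + (cos f - 1) * (cos f - 1) * 1 + sin f * sin f = 0.
Proof.
transitivity ((cos f - 1) ^+ 2 + sin f ^+ 2 - 2 + 2 * cos f); first ring.
rewrite trig_aux; ring.
Qed.

Lemma sph_scal {R : realType} (F F0 W l bp bq : R) : 0 < bp -> 0 < bq ->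
  -1 <= F <= 1 -> -1 <= F0 <= 1 -> 0 <= l -> l <= pi ->
  F = F0 + bp * bq * W ->
  (acos F = l <-> W = 2 * ((2 * bp * bq)^-1 * (cos l - cos (acos F0)))).
Proof.
move=> hp hq hF hF0 hl hlpi eF.
have b0 : (bq != 0) && (bp != 0) by rewrite !gt_eqF.
rewrite acosK; last by rewrite in_itv.
split.
  move=> h; have : F = cos l by rewrite -h acosK // in_itv.
  rewrite eF => <-; by field.
move=> hW.
have -> : F = cos l by rewrite eF hW; field.
by rewrite cosK // in_itv /= hl hlpi.
Qed.

Lemma hyp_scal {R : realType} (F F0 W l bp bq : R) : 0 < bp -> 0 < bq ->
  1 <= - F -> 1 <= - F0 -> 0 <= l ->
  F = F0 + bp * bq * W ->
  (acoshR (- F) = l <-> W = 2 * ((2 * bp * bq)^-1 * (- coshR l + coshR (acoshR (- F0))))).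
Proof.
move=> hp hq hF hF0 hl eF.
have b0 : (bq != 0) && (bp != 0) by rewrite !gt_eqF.
rewrite acoshK //.
split.
  move=> h; have : - F = coshR l by rewrite -h acoshK.
  have -> : - F = - F0 - bp * bq * W by rewrite eF; ring.
  move=> <-; by field.
move=> hW.
have -> : - F = coshR l by rewrite eF hW; field.
by rewrite coshK.
Qed.

Lemma dist_iff (R : realType) (k : geom) (n : nat)
  (a : 'I_n -> 'rV[R]_(amb k n)) (m : 'rV[R]_(amb k n))
  (nv : 'I_n -> 'rV[R]_(amb k n)) (b0 : 'I_n -> 'rV[R]_(amb k n))
  (ell : 'I_n -> 'I_n -> R) :
  (forall p, 0 < betaAlt a nv b0 p) ->
  geomForm m m = 1 ->
  (forall p, geomForm (nv p) m = 0) ->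
  (forall p, geomForm (nv p) (nv p) = 1) ->
  (forall p, geomForm (relv (b0 p) (a p)) m = 0) ->
  (forall i j, geomForm m (relv (a i) (a j)) = 0) ->
  (forall p, inXn (b0 p)) ->
  (forall p q, 0 <= ell p q) ->
  (k = Sph -> forall p q, ell p q <= pi) ->
  forall p q fp fq,
  geomDist (bPos a m nv b0 p fp) (bPos a m nv b0 q fq) = ell p q <->
  (cos fq - 1) * matH a nv b0 p q + (cos fp - 1) * matH a nv b0 q p
  + (cos fp - 1) * (cos fq - 1) * gramG nv p q + sin fp * sin fq
  = 2 * matE a nv b0 ell p q.
Proof.
move=> hbeta hm1 hnm hnn hbm ham hX hl0 hlpi p q fp fq.
have hb0 r : betaAlt a nv b0 r != 0 by apply/eqP => h; have := hbeta r; rewrite h ltxx.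
have hh r s : betaAlt a nv b0 r * matH a nv b0 r s
   = geomForm (relv (b0 r) (baseVertex a s)) (nv s).
  by rewrite /matH mulrA mulfV // mul1r.
have hpp r : matH a nv b0 r r = 1.
  by rewrite /matH /baseVertexq -/(betaAlt a nv b0 r) mulVf.
have bpos := hbeta p; have bqos := hbeta q.
destruct k.
-
  have Dm : geomForm (b0 p - b0 q) m = 0.
    have := hbm p; have := hbm q; have := ham p q; rewrite /relv /=.
    rewrite !(gFBl, gFBr) (gFC m (a p)) (gFC m (a q)) => h1 h2 h3; lra.
  have Dn s : geomForm (b0 p - b0 q) (nv s)
      = betaAlt a nv b0 p * matH a nv b0 p s - betaAlt a nv b0 q * matH a nv b0 q s.
    rewrite !hh /relv /= !gFBl; ring.
  have ev : bPos a m nv b0 p fp - bPos a m nv b0 q fq = (b0 p - b0 q)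
     + betaAlt a nv b0 p *: ((cos fp - 1) *: nv p + sin fp *: m)
     - betaAlt a nv b0 q *: ((cos fq - 1) *: nv q + sin fq *: m).
    by rewrite /bPos opprD addrACA addrA.
  have Qge := gF_ge0 (bPos a m nv b0 p fp - bPos a m nv b0 q fq) (erefl : isHyp Euc = false).
  rewrite ev (expand_Euc _ _ _ _ _ _ _ _ _ _ _ _ _ Dm (hnm p) (hnm q) hm1 (hnn p) (hnn q) (Dn p) (Dn q)
    (erefl : geomForm (nv p) (nv q) = gramG nv p q)) !hpp !trig_aux in Qge.
  rewrite /geomDist /matE ev (expand_Euc _ _ _ _ _ _ _ _ _ _ _ _ _ Dm (hnm p) (hnm q) hm1 (hnn p) (hnn q) (Dn p) (Dn q)
    (erefl : geomForm (nv p) (nv q) = gramG nv p q)) !hpp !trig_aux.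
  have Q0ge := gF_ge0 (b0 p - b0 q) (erefl : isHyp Euc = false).
  rewrite sqr_sqrtr //.
  move: (geomForm (b0 p - b0 q) (b0 p - b0 q)) Q0ge Qge => Q0 Q0ge Qge.
  apply: euc_scal => //.
  ring.
-
  have ex r s fr fs : geomForm (bPos a m nv b0 r fr) (bPos a m nv b0 s fs)
     = geomForm (b0 r) (b0 s) + betaAlt a nv b0 r * betaAlt a nv b0 s *
       ((cos fs - 1) * matH a nv b0 r s + (cos fr - 1) * matH a nv b0 s r
        + (cos fr - 1) * (cos fs - 1) * gramG nv r s + sin fr * sin fs).
    have h1 := hbm r; have h2 := hbm s; rewrite /relv /= in h1 h2.
    have h3 : geomForm (b0 r) (nv s) = betaAlt a nv b0 r * matH a nv b0 r s by rewrite hh.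
    have h4 : geomForm (nv r) (b0 s) = betaAlt a nv b0 s * matH a nv b0 s r by rewrite hh gFC.
    rewrite /bPos (expand_nonEuc _ _ _ _ _ _ _ _ _ _ _ _ _ _ h1 h2 (hnm r) (hnm s) hm1 h3 h4
      (erefl : geomForm (nv r) (nv s) = gramG nv r s)).
    ring.
  have sph r f : geomForm (bPos a m nv b0 r f) (bPos a m nv b0 r f) = 1.
    by rewrite ex hpp /gramG hnn Wself mulr0 addr0; exact: (hX r).
  rewrite /geomDist /matE.
  apply: sph_scal => //.
  + by apply: sph_bound; apply: sph.
  + by apply: sph_bound; apply: hX.
  + by apply: hlpi.
-
  have ex r s fr fs : geomForm (bPos a m nv b0 r fr) (bPos a m nv b0 s fs)
     = geomForm (b0 r) (b0 s) + betaAlt a nv b0 r * betaAlt a nv b0 s *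
       ((cos fs - 1) * matH a nv b0 r s + (cos fr - 1) * matH a nv b0 s r
        + (cos fr - 1) * (cos fs - 1) * gramG nv r s + sin fr * sin fs).
    have h1 := hbm r; have h2 := hbm s; rewrite /relv /= in h1 h2.
    have h3 : geomForm (b0 r) (nv s) = betaAlt a nv b0 r * matH a nv b0 r s by rewrite hh.
    have h4 : geomForm (nv r) (b0 s) = betaAlt a nv b0 s * matH a nv b0 s r by rewrite hh gFC.
    rewrite /bPos (expand_nonEuc _ _ _ _ _ _ _ _ _ _ _ _ _ _ h1 h2 (hnm r) (hnm s) hm1 h3 h4
      (erefl : geomForm (nv r) (nv s) = gramG nv r s)).
    ring.
  have hyp r f : geomForm (bPos a m nv b0 r f) (bPos a m nv b0 r f) = -1.
    by rewrite ex hpp /gramG hnn Wself mulr0 addr0; exact: (hX r).1.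
  have up0 r : 0 < b0 r 0 ord_max by apply: (hX r).2.
  have up r f : 0 < bPos a m nv b0 r f 0 ord_max.
    apply: (hyp_sheet _ _ (hyp r f) (hX r).1 _ (up0 r)).
    have h1 := hbm r; rewrite /relv /= in h1.
    rewrite /bPos !(gFDl, gFZl) (gFC m) h1 (gFC (nv r)) (hX r).1.
    have -> : geomForm (b0 r) (nv r) = betaAlt a nv b0 r by rewrite -[RHS]mulr1 -(hpp r) hh.
    have := cos_le1' f; have := hbeta r.
    move: (betaAlt a nv b0 r) (cos f) (sin f) => b c s' hb hc.
    have : b * (b * (c - 1)) <= 0 by nra.
    lra.
  rewrite /geomDist /matE.
  apply: hyp_scal => //.
  + by apply: hyp_ge1; rewrite ?hyp ?up.
  + by apply: hyp_ge1; rewrite ?(hX p).1 ?(hX q).1 ?up0.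
Qed.



Lemma geomDistC (R : realType) (k : geom) (n : nat) (x y : 'rV[R]_(amb k n)) :
  geomDist x y = geomDist y x.
Proof.
rewrite /geomDist; case: k x y => x y.
- by rewrite -opprB gFNl gFNr opprK.
- by rewrite gFC.
- by rewrite gFC.
Qed.

Lemma gF_sum (R : realType) (k : geom) (n : nat) (lam : 'I_n -> R)
  (v : 'I_n -> 'rV[R]_(amb k n)) (w : 'rV[R]_(amb k n)) :
  geomForm (\sum_(i < n) lam i *: v i) w = \sum_(i < n) lam i * geomForm (v i) w.
Proof.
apply: (big_rec2 (fun x y => geomForm x w = y)).
  by have := gFZl 0 0 w; rewrite scale0r mul0r.
by move=> i x y _ <-; rewrite gFDl gFZl.
Qed.

Theorem mainTheorem9 (R : realType) (k : geom) (n : nat)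
  (a : 'I_n -> 'rV[R]_(amb k n)) (m : 'rV[R]_(amb k n))
  (nv : 'I_n -> 'rV[R]_(amb k n)) (b0 : 'I_n -> 'rV[R]_(amb k n))
  (ell : 'I_n -> 'I_n -> R) :
  (forall i, inXn (a i)) ->
  nondegSimplex a ->
  unitNormal a m ->
  (forall p, innerFacetNormal a p (nv p)) ->
  (forall p, inXn (b0 p)) ->
  (forall p, nondegSimplex (replaceVertex a p (b0 p))) ->
  (* Delta_p^0 lies in the hyperplane of Delta ... *)
  (forall p, geomForm (relv (b0 p) (a p)) m = 0) ->
  (* ... folded onto Delta (dihedral angle 0): b_p^0 on the side of F_p where Delta lies *)
  (forall p, 0 < betaAlt a nv b0 p) ->
  (* prescribed lengths of the edges [b_p b_q] *)
  (forall p q, ell p q = ell q p) ->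
  (forall p q, 0 <= ell p q) ->
  (k = Sph -> forall p q, ell p q <= pi) ->
  configSpace a m nv b0 ell = eqVariety a nv b0 ell.
Proof.
move=> _ _ [hm1 ham] hF hB _ hbm hbeta hsym hl0 hlpi.
have hnn p : geomForm (nv p) (nv p) = 1 by case: (hF p) => _ [].
have hnm p : geomForm (nv p) m = 0.
  case: (hF p) => [[lam [hs ->]] _].
  rewrite gF_sum.
  case E: (isEuc k).
    have e i : geomForm (a i) m = geomForm (a p) m.
      have := ham i p; rewrite /relv E gFBr (gFC m) (gFC m) => h.
      by apply/eqP; rewrite -subr_eq0 h.
    under eq_bigr do rewrite e.
    by rewrite -mulr_suml hs // mul0r.
  apply: big1 => i _.
  by have := ham i i; rewrite /relv E gFC => ->; rewrite mulr0.
have hd := @dist_iff R k n a m nv b0 ell hbeta hm1 hnm hnn hbm ham hB hl0 hlpi.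
have Esym p q : matE a nv b0 ell p q = matE a nv b0 ell q p.
  by rewrite /matE (hsym p q) (geomDistC _ _ _ (b0 p)) [2 * _ * _]mulrAC.
have key (p q : 'I_n) (fp fq : R) : (p < q)%N ->
  ((cos fq - 1) * matH a nv b0 p q + (cos fp - 1) * matH a nv b0 q p
  + (cos fp - 1) * (cos fq - 1) * gramG nv p q + sin fp * sin fq
  = 2 * matE a nv b0 ell p q) <->
  (let (xp, yp) := homCoords (halfTan fp) in let (xq, yq) := homCoords (halfTan fq) in
     Defs.coefA a nv b0 ell p q * xp ^+ 2 * xq ^+ 2 + Defs.coefB a nv b0 ell p q * xp ^+ 2 * yq ^+ 2
     - 2 * xp * yp * xq * yq + Defs.coefB a nv b0 ell q p * yp ^+ 2 * xq ^+ 2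
     + matE a nv b0 ell p q * yp ^+ 2 * yq ^+ 2 = 0).
  move=> _.
  case ep: (homCoords (halfTan fp)) => [xp yp].
  case eq: (homCoords (halfTan fq)) => [xq yq].
  have [N1 [c1 s1]] := halfTan_hom _ _ _ ep.
  have [N2 [c2 s2]] := halfTan_hom _ _ _ eq.
  apply: alg_equiv => //.
  by rewrite /Defs.coefB Esym.
apply/seteqP; split => t.
  case=> phi [ht hd'] p q hpq.
  rewrite (ht p) (ht q); apply/(key p q) => //.
  by apply/hd/hd'; rewrite neq_ltn hpq.
move=> ht; exists (fun p => phiOf (t p)); split.
  by move=> p; rewrite halfTan_phiOf.
move=> p q hpq; apply/hd.
case: (ltngtP p q) => hlt.
- apply/(key p q) => //.
  by rewrite !halfTan_phiOf; apply: ht.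
- have := ht q p hlt; rewrite -{1}(halfTan_phiOf (t q)) -{1}(halfTan_phiOf (t p)).
  move/(key q p _ _ hlt) => h.
  rewrite Esym -h /gramG gFC; ring.
- by move: hpq; rewrite (val_inj hlt) eqxx.
Qed.
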